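(* In the twisted Heisenberg category $\mathcal{H}^t$ (defined in the context), for $n\ge 2$ the following relations hold in the algebra $\mathrm{End}(P^n)$, for all admissible $i,j$: $T_iX_i = X_{i+1}T_i + 1 + C_iC_{i+1}$, $\;X_iT_i = T_iX_{i+1} + 1 - C_iC_{i+1}$, $\;C_iX_j = (-1)^{\delta_{i,j}}X_jC_i$, $\;X_iX_j = X_jX_i$.
   Context: $\Bbbk$ is a field of characteristic $0$. $\mathcal{H}^t$ is the $\Bbbk$-linear $\mathbb{Z}/2\mathbb{Z}$-graded (super) monoidal category obtained as the idempotent completion (with finite direct sums and parity shifts) of the monoidal category generated by objects $P, Q$ (unit object $\mathbf 1$) and morphisms: an even upward crossing $s: PP\to PP$; even cups/caps $\eta:\mathbf 1\to QP$, $\varepsilon: QP\to\mathbf 1$, $\eta':\mathbf 1\to PQ$, $\varepsilon':PQ\to\mathbf 1$; and odd ''hollow dots'' $c_P:P\to P\{1\}$, $c_Q:Q\to Q\{1\}$. Morphisms are planar string diagrams ($P$ upward strand, $Q$ downward strand, composition read bottom to top); diagrams differing by planar isotopy are equal, and odd dots on different strands supercommute (interchanging heights of two dots on different strands gives a sign $-1$). Let $\sigma=(\varepsilon\otimes 1_{PQ})(1_Q\otimes s\otimes 1_Q)(1_{QP}\otimes\eta'):QP\to PQ$ and $\sigma'=(1_{QP}\otimes\varepsilon')(1_Q\otimes s\otimes 1_Q)(\eta\otimes 1_{PQ}):PQ\to QP$. Defining relations: $s^2=1$, braid relation for $s$ on $PPP$; $\sigma\sigma'=1_{PQ}$, $\sigma'\sigma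 = 1_{QP}-\eta\varepsilon-(c_Q\otimes 1_P)\eta\varepsilon(1_Q\otimes c_P)$; $\varepsilon\eta=1_{\mathbf 1}$, $(\varepsilon\otimes 1_P)(1_Q\otimes s)(\eta\otimes 1_P)=0$; $s(c_P\otimes 1)=(1\otimes c_P)s$, $(c_P\otimes 1)s=s(1\otimes c_P)$; $\varepsilon(c_Q\otimes 1_P)=-\varepsilon(1_Q\otimes c_P)$, $\varepsilon'(c_P\otimes 1_Q)=\varepsilon'(1_P\otimes c_Q)$, $(c_Q\otimes 1_P)\eta=(1_Q\otimes c_P)\eta$, $(c_P\otimes 1_Q)\eta'=-(1_P\otimes c_Q)\eta'$; $c_P^2=1_P$, $c_Q^2=-1_Q$, $\varepsilon(1_Q\otimes c_P)\eta=0$. In $\mathrm{End}(P^n)$ (product = composition), $T_i$ is the crossing $s$ applied to strands $i,i+1$ ($1\le i\le n-1$), $C_i$ is $c_P$ on strand $i$, and $X_i$ is the ''right curl'' $X=(1_P\otimes\varepsilon')(s\otimes 1_Q)(1_P\otimes\eta'):P\to P$ applied to strand $i$ ($1\le i\le n$); $1$ is the identity of $P^n$ and $\delta_{i,j}$ is the Kronecker delta. *)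

(* Defs.v *)
(* A syntactic presentation of the twisted Heisenberg
   category H^t (before idempotent completion, which does not change
   End(P^n)): morphisms are formal terms built from the generators by
   composition, tensor product and linear combinations; equality of
   morphisms is the smallest typed congruence [heq] containing the axioms
   of a strict monoidal k-linear supercategory (super interchange law),
   planar isotopy (zigzags + cyclicity of the crossing) and the defining
   relations of the context. *)
From mathcomp Require Import all_boot all_order all_algebra.
Set Implicit Arguments.
Unset Strict Implicit.
Unset Printing Implicit Defensive.
Import GRing.Theory.
Local Open Scope ring_scope.

(* Objects: words in P (= true, upward) and Q (= false, downward). *)
Definition obj := seq bool.

Inductive term (k : Type) : Type :=
| tId of obj
| tComp of term k & term k         (* tComp f g = f o g  (g first) *)
| tTens of term k & term k         (* tTens f g = f (x) g  (f on the left) *)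
| tZero of obj & obj
| tAdd of term k & term k
| tScale of k & term k
| tS                               (* upward crossing  PP -> PP, even *)
| tEta
| tEps
| tEta'
| tEps'
| tCP                              (* hollow dot on P, odd *)
| tCQ.                             (* hollow dot on Q, odd *)

Arguments tId {k}. Arguments tZero {k}. Arguments tS {k}. Arguments tEta {k}.
Arguments tEps {k}. Arguments tEta' {k}. Arguments tEps' {k}.
Arguments tCP {k}. Arguments tCQ {k}.

(* htyped a b p f : f is a homogeneous morphism a -> b of parity p. *)
Inductive htyped (k : Type) : obj -> obj -> bool -> term k -> Prop :=
| ty_id a : htyped a a false (tId a)
| ty_comp a b c p q f g :
    htyped b c p f -> htyped a b q g -> htyped a c (p (+) q) (tComp f g)
| ty_tens a b c d p q f g :
    htyped a b p f -> htyped c d q g -> htyped (a ++ c) (b ++ d) (p (+) q) (tTens f g)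
| ty_zero a b p : htyped a b p (tZero a b)
| ty_add a b p f g : htyped a b p f -> htyped a b p g -> htyped a b p (tAdd f g)
| ty_scale a b p (c : k) f : htyped a b p f -> htyped a b p (tScale c f)
| ty_s : htyped [:: true; true] [:: true; true] false tS
| ty_eta : htyped [::] [:: false; true] false tEta
| ty_eps : htyped [:: false; true] [::] false tEps
| ty_eta' : htyped [::] [:: true; false] false tEta'
| ty_eps' : htyped [:: true; false] [::] false tEps'
| ty_cP : htyped [:: true] [:: true] true tCP
| ty_cQ : htyped [:: false] [:: false] true tCQ.

Section Derived.
Variable k : Type.
Definition idP : term k := tId [:: true].
Definition idQ : term k := tId [:: false].
Definition sigma : term k :=
  tComp (tComp (tTens tEps (tId [:: true; false])) (tTens (tTens idQ tS) idQ))
        (tTens (tId [:: false; true]) tEta').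
Definition sigma' : term k :=
  tComp (tComp (tTens (tId [:: false; true]) tEps') (tTens (tTens idQ tS) idQ))
        (tTens tEta (tId [:: true; false])).
Definition Xcurl : term k :=
  tComp (tComp (tTens idP tEps') (tTens tS idQ)) (tTens idP tEta').
Definition etaPP : term k := tComp (tTens (tTens idQ tEta) idP) tEta.
Definition epsPP : term k := tComp tEps (tTens (tTens idQ tEps) idP).
Definition eta'PP : term k := tComp (tTens (tTens idP tEta') idQ) tEta'.
Definition eps'PP : term k := tComp tEps' (tTens (tTens idP tEps') idQ).
Definition idQQ : term k := tId [:: false; false].
(* the two 180-degree rotations of the crossing, QQ -> QQ *)
Definition s_leftmate : term k :=
  tComp (tComp (tTens epsPP idQQ) (tTens (tTens idQQ tS) idQQ)) (tTens idQQ eta'PP).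
Definition s_rightmate : term k :=
  tComp (tComp (tTens idQQ eps'PP) (tTens (tTens idQQ tS) idQQ)) (tTens etaPP idQQ).

(* the strand-local morphisms of End(P^n), indices 1-based *)
Definition Pn (n : nat) : obj := nseq n true.
Definition Ti (n i : nat) : term k :=
  tTens (tTens (tId (nseq i.-1 true)) tS) (tId (nseq (n - i.+1) true)).
Definition Ci (n i : nat) : term k :=
  tTens (tTens (tId (nseq i.-1 true)) tCP) (tId (nseq (n - i) true)).
Definition Xi (n i : nat) : term k :=
  tTens (tTens (tId (nseq i.-1 true)) Xcurl) (tId (nseq (n - i) true)).
End Derived.

Arguments idP {k}. Arguments idQ {k}. Arguments sigma {k}. Arguments sigma' {k}.
Arguments Xcurl {k}. Arguments etaPP {k}. Arguments epsPP {k}.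
Arguments eta'PP {k}. Arguments eps'PP {k}. Arguments idQQ {k}.
Arguments s_leftmate {k}. Arguments s_rightmate {k}.
Arguments Ti {k}. Arguments Ci {k}. Arguments Xi {k}.

Inductive heq (k : fieldType) : obj -> obj -> bool -> term k -> term k -> Prop :=
| heq_refl a b p f : htyped a b p f -> heq a b p f f
| heq_sym a b p f g : heq a b p f g -> heq a b p g f
| heq_trans a b p f g h : heq a b p f g -> heq a b p g h -> heq a b p f h
| heq_comp a b c p q f f' g g' :
    heq b c p f f' -> heq a b q g g' -> heq a c (p (+) q) (tComp f g) (tComp f' g')
| heq_tens a b c d p q f f' g g' :
    heq a b p f f' -> heq c d q g g' ->
    heq (a ++ c) (b ++ d) (p (+) q) (tTens f g) (tTens f' g')
| heq_add a b p f f' g g' :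
    heq a b p f f' -> heq a b p g g' -> heq a b p (tAdd f g) (tAdd f' g')
| heq_scale a b p (c : k) f f' : heq a b p f f' -> heq a b p (tScale c f) (tScale c f')
| heq_addA a b p f g h : htyped a b p f -> htyped a b p g -> htyped a b p h ->
    heq a b p (tAdd f (tAdd g h)) (tAdd (tAdd f g) h)
| heq_addC a b p f g : htyped a b p f -> htyped a b p g ->
    heq a b p (tAdd f g) (tAdd g f)
| heq_add0 a b p f : htyped a b p f -> heq a b p (tAdd f (tZero a b)) f
| heq_scale1 a b p f : htyped a b p f -> heq a b p (tScale 1 f) f
| heq_scaleA a b p (c d : k) f : htyped a b p f ->
    heq a b p (tScale c (tScale d f)) (tScale (c * d) f)
| heq_scaleDl a b p (c d : k) f : htyped a b p f ->
    heq a b p (tScale (c + d) f) (tAdd (tScale c f) (tScale d f))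
| heq_scaleDr a b p (c : k) f g : htyped a b p f -> htyped a b p g ->
    heq a b p (tScale c (tAdd f g)) (tAdd (tScale c f) (tScale c g))
| heq_scale0 a b p f : htyped a b p f -> heq a b p (tScale 0 f) (tZero a b)
| heq_idl a b p f : htyped a b p f -> heq a b p (tComp (tId b) f) f
| heq_idr a b p f : htyped a b p f -> heq a b p (tComp f (tId a)) f
| heq_compA a b c d p q r f g h :
    htyped c d p f -> htyped b c q g -> htyped a b r h ->
    heq a d (p (+) (q (+) r)) (tComp f (tComp g h)) (tComp (tComp f g) h)
| heq_compDl a b c p q f f' g : htyped b c p f -> htyped b c p f' -> htyped a b q g ->
    heq a c (p (+) q) (tComp (tAdd f f') g) (tAdd (tComp f g) (tComp f' g))
| heq_compDr a b c p q f g g' : htyped b c p f -> htyped a b q g -> htyped a b q g' ->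
    heq a c (p (+) q) (tComp f (tAdd g g')) (tAdd (tComp f g) (tComp f g'))
| heq_compZl a b c p q (x : k) f g : htyped b c p f -> htyped a b q g ->
    heq a c (p (+) q) (tComp (tScale x f) g) (tScale x (tComp f g))
| heq_compZr a b c p q (x : k) f g : htyped b c p f -> htyped a b q g ->
    heq a c (p (+) q) (tComp f (tScale x g)) (tScale x (tComp f g))
| heq_comp0l a b c p q g : htyped a b q g ->
    heq a c (p (+) q) (tComp (tZero b c) g) (tZero a c)
| heq_comp0r a b c p q f : htyped b c p f ->
    heq a c (p (+) q) (tComp f (tZero a b)) (tZero a c)
| heq_tensDl a b c d p q f f' g : htyped a b p f -> htyped a b p f' -> htyped c d q g ->
    heq (a ++ c) (b ++ d) (p (+) q) (tTens (tAdd f f') g) (tAdd (tTens f g) (tTens f' g))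
| heq_tensDr a b c d p q f g g' : htyped a b p f -> htyped c d q g -> htyped c d q g' ->
    heq (a ++ c) (b ++ d) (p (+) q) (tTens f (tAdd g g')) (tAdd (tTens f g) (tTens f g'))
| heq_tensZl a b c d p q (x : k) f g : htyped a b p f -> htyped c d q g ->
    heq (a ++ c) (b ++ d) (p (+) q) (tTens (tScale x f) g) (tScale x (tTens f g))
| heq_tensZr a b c d p q (x : k) f g : htyped a b p f -> htyped c d q g ->
    heq (a ++ c) (b ++ d) (p (+) q) (tTens f (tScale x g)) (tScale x (tTens f g))
| heq_tens0l a b c d p q g : htyped c d q g ->
    heq (a ++ c) (b ++ d) (p (+) q) (tTens (tZero a b) g) (tZero (a ++ c) (b ++ d))
| heq_tens0r a b c d p q f : htyped a b p f ->
    heq (a ++ c) (b ++ d) (p (+) q) (tTens f (tZero c d)) (tZero (a ++ c) (b ++ d))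
| heq_tensA a b c d e g p q r f1 f2 f3 :
    htyped a b p f1 -> htyped c d q f2 -> htyped e g r f3 ->
    heq ((a ++ c) ++ e) ((b ++ d) ++ g) (p (+) (q (+) r))
        (tTens (tTens f1 f2) f3) (tTens f1 (tTens f2 f3))
| heq_unitl a b p f : htyped a b p f -> heq a b p (tTens (tId [::]) f) f
| heq_unitr a b p f : htyped a b p f -> heq a b p (tTens f (tId [::])) f
| heq_tens_id a b : heq (a ++ b) (a ++ b) false (tTens (tId a) (tId b)) (tId (a ++ b))
| heq_interchange a b c d e g p q r s f f' h h' :
    htyped b c p f -> htyped e g q f' -> htyped a b r h -> htyped d e s h' ->
    heq (a ++ d) (c ++ g) ((p (+) q) (+) (r (+) s))
        (tComp (tTens f f') (tTens h h'))
        (tScale ((-1) ^+ (q && r)) (tTens (tComp f h) (tComp f' h')))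
| heq_zz1 : heq [:: false] [:: false] false
    (tComp (tTens tEps idQ) (tTens idQ tEta')) idQ
| heq_zz2 : heq [:: true] [:: true] false
    (tComp (tTens idP tEps) (tTens tEta' idP)) idP
| heq_zz3 : heq [:: true] [:: true] false
    (tComp (tTens tEps' idP) (tTens idP tEta)) idP
| heq_zz4 : heq [:: false] [:: false] false
    (tComp (tTens idQ tEps') (tTens tEta idQ)) idQ
| heq_cyc : heq [:: false; false] [:: false; false] false s_leftmate s_rightmate
| heq_s2 : heq [:: true; true] [:: true; true] false (tComp tS tS) (tId [:: true; true])
| heq_braid : heq [:: true; true; true] [:: true; true; true] false
    (tComp (tComp (tTens tS idP) (tTens idP tS)) (tTens tS idP))
    (tComp (tComp (tTens idP tS) (tTens tS idP)) (tTens idP tS))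
| heq_sigma1 : heq [:: true; false] [:: true; false] false
    (tComp sigma sigma') (tId [:: true; false])
| heq_sigma2 : heq [:: false; true] [:: false; true] false
    (tComp sigma' sigma)
    (tAdd (tAdd (tId [:: false; true]) (tScale (-1) (tComp tEta tEps)))
          (tScale (-1) (tComp (tComp (tTens tCQ idP) (tComp tEta tEps)) (tTens idQ tCP))))
| heq_bubble : heq [::] [::] false (tComp tEps tEta) (tId [::])
| heq_curl0 : heq [:: true] [:: true] false
    (tComp (tComp (tTens tEps idP) (tTens idQ tS)) (tTens tEta idP)) (tZero [:: true] [:: true])
| heq_sdot1 : heq [:: true; true] [:: true; true] true
    (tComp tS (tTens tCP idP)) (tComp (tTens idP tCP) tS)
| heq_sdot2 : heq [:: true; true] [:: true; true] true
    (tComp (tTens tCP idP) tS) (tComp tS (tTens idP tCP))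
| heq_dotcap : heq [:: false; true] [::] true
    (tComp tEps (tTens tCQ idP)) (tScale (-1) (tComp tEps (tTens idQ tCP)))
| heq_dotcap' : heq [:: true; false] [::] true
    (tComp tEps' (tTens tCP idQ)) (tComp tEps' (tTens idP tCQ))
| heq_dotcup : heq [::] [:: false; true] true
    (tComp (tTens tCQ idP) tEta) (tComp (tTens idQ tCP) tEta)
| heq_dotcup' : heq [::] [:: true; false] true
    (tComp (tTens tCP idQ) tEta') (tScale (-1) (tComp (tTens idP tCQ) tEta'))
| heq_cP2 : heq [:: true] [:: true] false (tComp tCP tCP) idP
| heq_cQ2 : heq [:: false] [:: false] false (tComp tCQ tCQ) (tScale (-1) idQ)
| heq_dotbubble : heq [::] [::] true
    (tComp (tComp tEps (tTens idQ tCP)) tEta) (tZero [::] [::]).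

(* Main.v *)
Require Import Defs.
From mathcomp Require Import all_boot all_order all_algebra.
From Stdlib Require Import Setoid Morphisms.
From mathcomp Require Import zify.
Import GRing.Theory.
Local Open Scope ring_scope.

Section Infra.
Context {k : fieldType}.
Notation term := (term k).

Definition tyT := (obj * obj * bool)%type.

Fixpoint infer (f : term) : option tyT :=
  match f with
  | tId a => Some (a, a, false)
  | tComp f g =>
      match infer f, infer g with
      | Some (b, c, p), Some (a, b', q) => if b' == b then Some (a, c, p (+) q) else None
      | _, _ => None end
  | tTens f g =>
      match infer f, infer g with
      | Some (a, b, p), Some (c, d, q) => Some (a ++ c, b ++ d, p (+) q)
      | _, _ => None end
  | tZero a b => Some (a, b, false)
  | tAdd f g =>
      match infer f, infer g with
      | Some (a, b, p), Some (a', b', q) =>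
          if [&& a == a', b == b' & p == q] then Some (a, b, p) else None
      | _, _ => None end
  | tScale _ f => infer f
  | tS => Some ([:: true; true], [:: true; true], false)
  | tEta => Some ([::], [:: false; true], false)
  | tEps => Some ([:: false; true], [::], false)
  | tEta' => Some ([::], [:: true; false], false)
  | tEps' => Some ([:: true; false], [::], false)
  | tCP => Some ([:: true], [:: true], true)
  | tCQ => Some ([:: false], [:: false], true)
  end.

Lemma infer_compE f g a c r : infer (tComp f g) = Some (a, c, r) ->
  exists b p q, [/\ infer f = Some (b, c, p), infer g = Some (a, b, q) & r = p (+) q].
Proof.
rewrite /=; case: (infer f) => [[[b1 c1] p1]|] //; case: (infer g) => [[[a1 b2] q1]|] //.
case: eqP => // -> [<- <- <-]; by exists b1, p1, q1.
Qed.

Lemma infer_tensE f g x y r : infer (tTens f g) = Some (x, y, r) ->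
  exists a b c d p q, [/\ infer f = Some (a, b, p), infer g = Some (c, d, q),
     x = a ++ c, y = b ++ d & r = p (+) q].
Proof.
rewrite /=; case: (infer f) => [[[a1 b1] p1]|] //; case: (infer g) => [[[c1 d1] q1]|] //.
case=> <- <- <-; by exists a1, b1, c1, d1, p1, q1.
Qed.

Lemma infer_addE f g a b p : infer (tAdd f g) = Some (a, b, p) ->
  infer f = Some (a, b, p) /\ infer g = Some (a, b, p).
Proof.
rewrite /=; case: (infer f) => [[[a1 b1] p1]|] //; case: (infer g) => [[[a2 b2] p2]|] //.
case: (a1 =P a2) => [<-|]; last by [].
case: (b1 =P b2) => [<-|]; last by [].
case: (p1 =P p2) => [<-|]; last by [].
by move=> -[<- <- <-].
Qed.

Lemma infer_sound f a b p : infer f = Some (a, b, p) -> htyped a b p f.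
Proof.
elim: f a b p => [a0|f IHf g IHg|f IHf g IHg|a0 b0|f IHf g IHg|c f IHf| | | | | | |] a b p.
- by case=> <- <- <-; constructor.
- case/infer_compE=> b1 [p1] [q1] [Hf Hg ->]; apply: ty_comp; [exact: IHf Hf|exact: IHg Hg].
- case/infer_tensE=> a1 [b1] [c1] [d1] [p1] [q1] [Hf Hg -> -> ->].
  apply: ty_tens; [exact: IHf Hf|exact: IHg Hg].
- by case=> <- <- _; constructor.
- case/infer_addE=> Hf Hg; apply: ty_add; [exact: IHf Hf|exact: IHg Hg].
- move=> H; apply: ty_scale; exact: IHf H.
all: by case=> <- <- <-; constructor.
Qed.

Definition E (f g : term) : Prop :=
  infer f = infer g /\ forall a b p, infer f = Some (a, b, p) -> heq a b p f g.

Lemma E_refl f : E f f.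
Proof. split=> // a b p H; apply: heq_refl; exact: infer_sound. Qed.
Lemma E_sym f g : E f g -> E g f.
Proof. case=> H1 H2; split=> // a b p H; apply: heq_sym; apply: H2; by rewrite H1. Qed.
Lemma E_trans f g h : E f g -> E g h -> E f h.
Proof.
case=> H1 H2 [H3 H4]; split; first by rewrite H1.
move=> a b p H; apply: heq_trans (H2 _ _ _ H) (H4 _ _ _ _); by rewrite -H1.
Qed.

Lemma E_comp f f' g g' : E f f' -> E g g' -> E (tComp f g) (tComp f' g').
Proof.
case=> H1 H2 [H3 H4]; split; first by rewrite /= H1 H3.
move=> a c r /infer_compE [b [p [q [Hf Hg ->]]]].
apply: heq_comp; [exact: H2 _ _ _ Hf|exact: H4 _ _ _ Hg].
Qed.
Lemma E_tens f f' g g' : E f f' -> E g g' -> E (tTens f g) (tTens f' g').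
Proof.
case=> H1 H2 [H3 H4]; split; first by rewrite /= H1 H3.
move=> x y r /infer_tensE [a [b [c [d [p [q [Hf Hg -> -> ->]]]]]]].
apply: heq_tens; [exact: H2 _ _ _ Hf|exact: H4 _ _ _ Hg].
Qed.
Lemma E_add f f' g g' : E f f' -> E g g' -> E (tAdd f g) (tAdd f' g').
Proof.
case=> H1 H2 [H3 H4]; split; first by rewrite /= H1 H3.
move=> a b p /infer_addE [Hf Hg]; apply: heq_add; [exact: H2 _ _ _ Hf|exact: H4 _ _ _ Hg].
Qed.
Lemma E_scale c f f' : E f f' -> E (tScale c f) (tScale c f').
Proof.
case=> H1 H2; split; first by rewrite /= H1.
move=> a b p Hf; apply: heq_scale; exact: H2 _ _ _ Hf.
Qed.

End Infra.
Arguments infer_sound {k f a b p}.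


Add Parametric Relation (k : fieldType) : (term k) (@E k)
  reflexivity proved by (@E_refl k) symmetry proved by (@E_sym k)
  transitivity proved by (@E_trans k) as E_rel.
Add Parametric Morphism (k : fieldType) : (@tComp k) with signature
  (@E k) ==> (@E k) ==> (@E k) as tComp_mor.
Proof. by move=> ? ? H ? ? H'; apply: E_comp. Qed.
Add Parametric Morphism (k : fieldType) : (@tTens k) with signature
  (@E k) ==> (@E k) ==> (@E k) as tTens_mor.
Proof. by move=> ? ? H ? ? H'; apply: E_tens. Qed.
Add Parametric Morphism (k : fieldType) : (@tAdd k) with signature
  (@E k) ==> (@E k) ==> (@E k) as tAdd_mor.
Proof. by move=> ? ? H ? ? H'; apply: E_add. Qed.
Add Parametric Morphism (k : fieldType) c : (@tScale k c) with signature
  (@E k) ==> (@E k) as tScale_mor.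
Proof. by move=> ? ? H; apply: E_scale. Qed.

Section Rules.
Context {k : fieldType}.
Implicit Types f g h : term k.
Definition ok (f : term k) := if infer f is Some _ then true else false.
Definition par (f : term k) := if infer f is Some (_, _, p) then p else false.

Lemma of_heq a b p f g : infer f = Some (a,b,p) -> infer g = Some (a,b,p) -> heq a b p f g -> E f g.
Proof. move=> Hf Hg H; split; first by rewrite Hf Hg. by move=> a' b' p'; rewrite Hf => -[<- <- <-]. Qed.

Arguments of_heq {a b p f g}.
Lemma heq_eqp a b p p' f g : p = p' -> heq a b p f g -> heq a b p' f g.
Proof. by move=> <-. Qed.

Ltac nonecl := try by repeat (case: ifP => //=).
Ltac sndd := by apply: infer_sound; eassumption.

Lemma E_idl b f : ok (tComp (tId b) f) -> E (tComp (tId b) f) f.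
Proof.
rewrite /ok /=; case Hf: (infer f) => [[[a c] p]|] //; case: eqP => // Ec _; subst.
split; first by rewrite /= Hf eqxx.
move=> a' b' p'; rewrite /= Hf eqxx => -[<- <- <-]; apply: heq_idl; sndd.
Qed.

Lemma E_idr a f : ok (tComp f (tId a)) -> E (tComp f (tId a)) f.
Proof.
rewrite /ok /=; case Hf: (infer f) => [[[b c] p]|] //; case: eqP => // Ec _; subst.
split; first by rewrite /= Hf eqxx addbF.
move=> a' b' p'; rewrite /= Hf eqxx addbF => -[<- <- <-]; apply: heq_idr; sndd.
Qed.

Lemma E_compA f g h : ok (tComp f (tComp g h)) -> E (tComp f (tComp g h)) (tComp (tComp f g) h).
Proof.
rewrite /ok /=; case Hf: (infer f) => [[[b1 c1] p]|] //; case Hg: (infer g) => [[[a2 b2] q]|] //;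
case Hh: (infer h) => [[[a3 b3] r]|] //.
case: (b3 =P a2) => //= E1; case: (b2 =P b1) => //= E2 _; subst.
split; first by rewrite /= Hf Hg Hh !eqxx addbA.
move=> a' b' p'; rewrite /= Hf Hg Hh !eqxx => -[<- <- <-]; apply: heq_compA; sndd.
Qed.

Lemma E_tensA f g h : ok (tTens (tTens f g) h) -> E (tTens (tTens f g) h) (tTens f (tTens g h)).
Proof.
rewrite /ok /=; case Hf: (infer f) => [[[a1 b1] p]|] //; case Hg: (infer g) => [[[a2 b2] q]|] //;
case Hh: (infer h) => [[[a3 b3] r]|] // _.
split; first by rewrite /= Hf Hg Hh !catA addbA.
move=> a' b' p'; rewrite /= Hf Hg Hh => -[<- <- <-]; rewrite -addbA; apply: heq_tensA; sndd.
Qed.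

Lemma E_unitl f : ok f -> E (tTens (tId [::]) f) f.
Proof.
rewrite /ok /=; case Hf: (infer f) => [[[a b] p]|] // _.
split; first by rewrite /= Hf.
move=> a' b' p'; rewrite /= Hf => -[<- <- <-]; apply: heq_unitl; sndd.
Qed.

Lemma E_unitr f : ok f -> E (tTens f (tId [::])) f.
Proof.
rewrite /ok /=; case Hf: (infer f) => [[[a b] p]|] // _.
split; first by rewrite /= Hf !cats0 addbF.
move=> a' b' p'; rewrite /= Hf !cats0 addbF => -[<- <- <-]; apply: heq_unitr; sndd.
Qed.

Lemma E_tens_id (a b : obj) : E (tTens (tId a) (tId b) : term k) (tId (a ++ b)).
Proof. apply: of_heq; [reflexivity|reflexivity|exact: heq_tens_id]. Qed.

Lemma E_ichgP f f' h h' :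
  ok (tComp (tTens f f') (tTens h h')) && ok (tTens (tComp f h) (tComp f' h')) && ~~ (par f' && par h) ->
  E (tComp (tTens f f') (tTens h h')) (tTens (tComp f h) (tComp f' h')).
Proof.
rewrite /ok /par /=; case Hf: (infer f) => [[[b c] p]|] //; case Hf': (infer f') => [[[e g] q]|] //;
case Hh: (infer h) => [[[a b2] r]|] //; case Hh': (infer h') => [[[d e2] s]|] //.
case: (b2 =P b) => E1; last by rewrite /= ?andbF.
case: (e2 =P e) => E2; last by rewrite /= ?andbF.
subst; rewrite ?eqxx /= => Hqr.
split; first by rewrite /= Hf Hf' Hh Hh' !eqxx addbACA.
move=> a' b' p'; rewrite /= Hf Hf' Hh Hh' !eqxx => -[<- <- <-].
have H := heq_interchange (infer_sound Hf) (infer_sound Hf') (infer_sound Hh) (infer_sound Hh').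
rewrite (negbTE Hqr) expr0 in H.
apply: heq_trans H _; apply: heq_scale1; apply: infer_sound; by rewrite /= Hf Hf' Hh Hh' !eqxx addbACA.
Qed.

Lemma E_ichgN f f' h h' :
  ok (tComp (tTens f f') (tTens h h')) && ok (tTens (tComp f h) (tComp f' h')) && (par f' && par h) ->
  E (tComp (tTens f f') (tTens h h')) (tScale (-1) (tTens (tComp f h) (tComp f' h'))).
Proof.
rewrite /ok /par /=; case Hf: (infer f) => [[[b c] p]|] //; case Hf': (infer f') => [[[e g] q]|] //;
case Hh: (infer h) => [[[a b2] r]|] //; case Hh': (infer h') => [[[d e2] s]|] //.
case: (b2 =P b) => E1; last by rewrite /= ?andbF.
case: (e2 =P e) => E2; last by rewrite /= ?andbF.
subst; rewrite ?eqxx /= => Hqr.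
split; first by rewrite /= Hf Hf' Hh Hh' !eqxx addbACA.
move=> a' b' p'; rewrite /= Hf Hf' Hh Hh' !eqxx => -[<- <- <-].
have H := heq_interchange (infer_sound Hf) (infer_sound Hf') (infer_sound Hh) (infer_sound Hh').
by rewrite Hqr expr1 in H.
Qed.


Ltac cs x y := case: (x =P y) => [?|_]; [subst y | by rewrite /= ?andbF ?andFb].
Ltac simp := repeat progress (rewrite /= ?eqxx; try match goal with H : infer _ = _ |- _ => rewrite H end).

Lemma E_compDl f f' g : ok (tComp (tAdd f f') g) -> E (tComp (tAdd f f') g) (tAdd (tComp f g) (tComp f' g)).
Proof.
rewrite /ok /=; case Hf: (infer f) => [[[b c] p]|]; nonecl; case Hf': (infer f') => [[[b1 c1] p1]|]; nonecl;
case Hg: (infer g) => [[[a b2] q]|]; nonecl.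
cs b b1; cs c c1; cs p p1; rewrite ?eqxx /=; cs b2 b; subst => _.
split; first by simp.
move=> a' b' p'; simp; case=> <- <- <-; apply: heq_compDl; sndd.
Qed.

Lemma E_compDr f g g' : ok (tComp f (tAdd g g')) -> E (tComp f (tAdd g g')) (tAdd (tComp f g) (tComp f g')).
Proof.
rewrite /ok /=; case Hf: (infer f) => [[[b c] p]|]; nonecl; case Hg: (infer g) => [[[a b1] q]|]; nonecl;
case Hg': (infer g') => [[[a2 b2] q2]|]; nonecl.
cs a a2; cs b1 b2; cs q q2; rewrite ?eqxx /=; cs b1 b; subst => _.
split; first by simp.
move=> a' b' p'; simp; case=> <- <- <-; apply: heq_compDr; sndd.
Qed.

Lemma E_compZl c f g : ok (tComp f g) -> E (tComp (tScale c f) g) (tScale c (tComp f g)).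
Proof.
rewrite /ok /=; case Hf: (infer f) => [[[b d] p]|]; nonecl; case Hg: (infer g) => [[[a b1] q]|]; nonecl.
cs b1 b; subst => _.
split; first by simp.
move=> a' b' p'; simp; case=> <- <- <-; apply: heq_compZl; sndd.
Qed.

Lemma E_compZr c f g : ok (tComp f g) -> E (tComp f (tScale c g)) (tScale c (tComp f g)).
Proof.
rewrite /ok /=; case Hf: (infer f) => [[[b d] p]|]; nonecl; case Hg: (infer g) => [[[a b1] q]|]; nonecl.
cs b1 b; subst => _.
split; first by simp.
move=> a' b' p'; simp; case=> <- <- <-; apply: heq_compZr; sndd.
Qed.

Lemma E_tensDl f f' g : ok (tTens (tAdd f f') g) -> E (tTens (tAdd f f') g) (tAdd (tTens f g) (tTens f' g)).
Proof.
rewrite /ok /=; case Hf: (infer f) => [[[a b] p]|]; nonecl; case Hf': (infer f') => [[[a1 b1] p1]|]; nonecl;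
case Hg: (infer g) => [[[c d] q]|]; nonecl.
cs a a1; cs b b1; cs p p1; subst => _.
split; first by simp.
move=> a' b' p'; simp; case=> <- <- <-; apply: heq_tensDl; sndd.
Qed.

Lemma E_tensDr f g g' : ok (tTens f (tAdd g g')) -> E (tTens f (tAdd g g')) (tAdd (tTens f g) (tTens f g')).
Proof.
rewrite /ok /=; case Hf: (infer f) => [[[a b] p]|]; nonecl; case Hg: (infer g) => [[[c d] q]|]; nonecl;
case Hg': (infer g') => [[[c1 d1] q1]|]; nonecl.
cs c c1; cs d d1; cs q q1; subst => _.
split; first by simp.
move=> a' b' p'; simp; case=> <- <- <-; apply: heq_tensDr; sndd.
Qed.

Lemma E_tensZl c f g : ok (tTens f g) -> E (tTens (tScale c f) g) (tScale c (tTens f g)).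
Proof.
rewrite /ok /=; case Hf: (infer f) => [[[a b] p]|]; nonecl; case Hg: (infer g) => [[[c1 d] q]|]; nonecl; move=> _.
split; first by simp.
move=> a' b' p'; simp; case=> <- <- <-; apply: heq_tensZl; sndd.
Qed.

Lemma E_tensZr c f g : ok (tTens f g) -> E (tTens f (tScale c g)) (tScale c (tTens f g)).
Proof.
rewrite /ok /=; case Hf: (infer f) => [[[a b] p]|]; nonecl; case Hg: (infer g) => [[[c1 d] q]|]; nonecl; move=> _.
split; first by simp.
move=> a' b' p'; simp; case=> <- <- <-; apply: heq_tensZr; sndd.
Qed.

Lemma E_addA f g h : ok (tAdd f (tAdd g h)) -> E (tAdd f (tAdd g h)) (tAdd (tAdd f g) h).
Proof.
rewrite /ok /=; case Hf: (infer f) => [[[a b] p]|]; nonecl; case Hg: (infer g) => [[[a1 b1] p1]|]; nonecl;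
case Hh: (infer h) => [[[a2 b2] p2]|]; nonecl.
cs a1 a2; cs b1 b2; cs p1 p2; rewrite ?eqxx /=; cs a a1; cs b b1; cs p p1; subst => _.
split; first by simp.
move=> a' b' p'; simp; case=> <- <- <-; apply: heq_addA; sndd.
Qed.

Lemma E_addC f g : ok (tAdd f g) -> E (tAdd f g) (tAdd g f).
Proof.
rewrite /ok /=; case Hf: (infer f) => [[[a b] p]|]; nonecl; case Hg: (infer g) => [[[a1 b1] p1]|]; nonecl.
cs a a1; cs b b1; cs p p1; subst => _.
split; first by simp.
move=> a' b' p'; simp; case=> <- <- <-; apply: heq_addC; sndd.
Qed.

Lemma E_scale1 f : ok f -> E (tScale 1 f) f.
Proof.
rewrite /ok /=; case Hf: (infer f) => [[[a b] p]|]; nonecl; move=> _.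
split; first by simp.
move=> a' b' p'; simp; case=> <- <- <-; apply: heq_scale1; sndd.
Qed.

Lemma E_scaleA c d f : ok f -> E (tScale c (tScale d f)) (tScale (c * d) f).
Proof.
rewrite /ok /=; case Hf: (infer f) => [[[a b] p]|]; nonecl; move=> _.
split; first by simp.
move=> a' b' p'; simp; case=> <- <- <-; apply: heq_scaleA; sndd.
Qed.

Lemma E_scaleDr c f g : ok (tAdd f g) -> E (tScale c (tAdd f g)) (tAdd (tScale c f) (tScale c g)).
Proof.
rewrite /ok /=; case Hf: (infer f) => [[[a b] p]|]; nonecl; case Hg: (infer g) => [[[a1 b1] p1]|]; nonecl.
cs a a1; cs b b1; cs p p1; subst => _.
split; first by simp.
move=> a' b' p'; simp; case=> <- <- <-; apply: heq_scaleDr; sndd.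
Qed.

Lemma E_cancel f g : ok (tAdd f g) -> E (tAdd f (tAdd (tScale (-1) g) g)) f.
Proof.
rewrite /ok /=; case Hf: (infer f) => [[[a b] p]|]; nonecl; case Hg: (infer g) => [[[a1 b1] p1]|]; nonecl.
cs a a1; cs b b1; cs p p1; subst => _.
split; first by simp.
move=> a' b' p'; simp; case=> <- <- <-.
have Tf := infer_sound Hf; have Tg := infer_sound Hg.
have h1 : heq a b p (tAdd (tScale (-1) g) g) (tZero a b).
  apply: heq_trans (heq_add (heq_refl (ty_scale (-1) Tg)) (heq_sym (heq_scale1 Tg))) _.
  apply: heq_trans (heq_sym (heq_scaleDl (-1) 1 Tg)) _.
  rewrite addNr; exact: heq_scale0 Tg.
exact: heq_trans (heq_add (heq_refl Tf) h1) (heq_add0 Tf).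
Qed.

Notation iP := (tId [:: true]).
Notation iQ := (tId [:: false]).
Notation iQP := (tId [:: false; true]).

Lemma E_zz1 : E (k:=k) (tComp (tTens tEps iQ) (tTens iQ tEta')) iQ.
Proof. apply: of_heq; last exact: (@heq_zz1 k); reflexivity. Qed.
Lemma E_zz2 : E (k:=k) (tComp (tTens iP tEps) (tTens tEta' iP)) iP.
Proof. apply: of_heq; last exact: (@heq_zz2 k); reflexivity. Qed.
Lemma E_zz3 : E (k:=k) (tComp (tTens tEps' iP) (tTens iP tEta)) iP.
Proof. apply: of_heq; last exact: (@heq_zz3 k); reflexivity. Qed.
Lemma E_zz4 : E (k:=k) (tComp (tTens iQ tEps') (tTens tEta iQ)) iQ.
Proof. apply: of_heq; last exact: (@heq_zz4 k); reflexivity. Qed.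
Lemma E_s2 : E (k:=k) (tComp tS tS) (tId [:: true; true]).
Proof. apply: of_heq; last exact: (@heq_s2 k); reflexivity. Qed.
Lemma E_braid : E (k:=k) (tComp (tComp (tTens tS iP) (tTens iP tS)) (tTens tS iP))
                  (tComp (tComp (tTens iP tS) (tTens tS iP)) (tTens iP tS)).
Proof. apply: of_heq; last exact: (@heq_braid k); reflexivity. Qed.
Lemma E_sigma2 : E (k:=k) (tComp sigma' sigma)
    (tAdd (tAdd iQP (tScale (-1) (tComp tEta tEps)))
          (tScale (-1) (tComp (tComp (tTens tCQ iP) (tComp tEta tEps)) (tTens iQ tCP)))).
Proof. apply: of_heq; last exact: (@heq_sigma2 k); reflexivity. Qed.
Lemma E_sdot1 : E (k:=k) (tComp tS (tTens tCP iP)) (tComp (tTens iP tCP) tS).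
Proof. apply: of_heq; last exact: (@heq_sdot1 k); reflexivity. Qed.
Lemma E_sdot2 : E (k:=k) (tComp (tTens tCP iP) tS) (tComp tS (tTens iP tCP)).
Proof. apply: of_heq; last exact: (@heq_sdot2 k); reflexivity. Qed.
Lemma E_dotcap' : E (k:=k) (tComp tEps' (tTens tCP iQ)) (tComp tEps' (tTens iP tCQ)).
Proof. apply: of_heq; last exact: (@heq_dotcap' k); reflexivity. Qed.
Lemma E_dotcup' : E (k:=k) (tComp (tTens tCP iQ) tEta') (tScale (-1) (tComp (tTens iP tCQ) tEta')).
Proof. apply: of_heq; last exact: (@heq_dotcup' k); reflexivity. Qed.

End Rules.

Section Loc.
Context {k : fieldType}.
Implicit Types f g h : term k.
Ltac cs2 x y := case: (x =P y) => //= ?.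
Ltac simp2 := repeat progress (rewrite /= ?eqxx ?andbF ?andFb; try match goal with H : infer _ = _ |- _ => rewrite H end).

Hint Resolve E_refl : core.

Lemma E_tcl f g x : ok (tTens (tComp f g) (tId x)) ->
  E (tTens (tComp f g) (tId x)) (tComp (tTens f (tId x)) (tTens g (tId x))).
Proof.
rewrite /ok /=; case Hf: (infer f) => [[[b c] p]|] //; case Hg: (infer g) => [[[a b1] q]|] //.
cs2 b1 b; subst => _.
symmetry; rewrite E_ichgP; last by rewrite /ok /par; simp2.
rewrite E_idl; [reflexivity| by rewrite /ok /= eqxx].
Qed.

Lemma E_tcr f g x : ok (tTens (tId x) (tComp f g)) ->
  E (tTens (tId x) (tComp f g)) (tComp (tTens (tId x) f) (tTens (tId x) g)).
Proof.
rewrite /ok /=; case Hf: (infer f) => [[[b c] p]|] //; case Hg: (infer g) => [[[a b1] q]|] //.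
cs2 b1 b; subst => _.
symmetry; rewrite E_ichgP; last by rewrite /ok /par; simp2.
rewrite E_idl; [reflexivity| by rewrite /ok /= eqxx].
Qed.

Notation iP := (tId [:: true]).
Notation iQ := (tId [:: false]).
Notation iPP := (tId [:: true; true]).
Notation iQP := (tId [:: false; true]).
Notation iPQ := (tId [:: true; false]).
Notation Xc := (tComp (tComp (tTens iP tEps') (tTens tS iQ)) (tTens iP tEta')).
Notation Phi M := (tComp (tComp (tTens (tTens iP tEps') iP) (tTens tS iQP))
                         (tComp (tTens iPP M) (tTens (tTens iP tEta') iP))).

Lemma Phi_id : E (k:=k) (tTens Xc iP) (Phi iQP).
Proof.
rewrite E_tcl // E_tcl // (E_tensA tS iQ iP) // E_tens_id.
rewrite E_tens_id E_idl //.
Qed.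

Lemma E_compA' f g h : ok (tComp (tComp f g) h) -> E (tComp (tComp f g) h) (tComp f (tComp g h)).
Proof.
move=> H; symmetry; apply: E_compA; move: H; rewrite /ok /=.
case Hf: (infer f) => [[[b1 c1] p]|] //; case Hg: (infer g) => [[[a2 b2] q]|] //;
case Hh: (infer h) => [[[a3 b3] r]|] //; by repeat (case: eqP => //= ?; subst).
Qed.

Lemma E_tensI a b f : ok (tTens (tId (a ++ b)) f) ->
  E (tTens (tId (a ++ b)) f) (tTens (tId a) (tTens (tId b) f)).
Proof.
move=> H; rewrite -E_tens_id E_tensA; first reflexivity; move: H; rewrite /ok /=.
by case: (infer f) => [[[? ?] ?]|].
Qed.

Lemma E_tensI' a b f : ok (tTens f (tId (a ++ b))) ->
  E (tTens f (tId (a ++ b))) (tTens (tTens f (tId a)) (tId b)).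
Proof.
move=> H; rewrite -E_tens_id -E_tensA; first reflexivity; move: H; rewrite /ok /=.
by case: (infer f) => [[[? ?] ?]|].
Qed.

Lemma E_slide1 f g b c : ok (tComp (tId b) f) && ok (tComp g (tId c)) && ~~ (par g && par f) ->
  E (tTens f g) (tComp (tTens (tId b) g) (tTens f (tId c))).
Proof.
rewrite /ok /par /=; case Hf: (infer f) => [[[a1 b1] p1]|] //; case Hg: (infer g) => [[[c1 d1] q1]|]; last by rewrite ?andbT ?andbF.
case: (b1 =P b) => ?; subst => //; case: (c =P c1) => ?; subst => //= H.
symmetry; rewrite E_ichgP; last by rewrite /ok /par; simp2.
rewrite E_idl; last by rewrite /ok; simp2.
rewrite E_idr //; by rewrite /ok; simp2.
Qed.

Lemma E_slide2 f g a d : ok (tComp f (tId a)) && ok (tComp (tId d) g) ->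
  E (tTens f g) (tComp (tTens f (tId d)) (tTens (tId a) g)).
Proof.
rewrite /ok /par /=; case Hf: (infer f) => [[[a1 b1] p1]|] //; case Hg: (infer g) => [[[c1 d1] q1]|]; last by rewrite ?andbT ?andbF.
case: (a =P a1) => ?; subst => //; case: (d1 =P d) => ?; subst => //= H.
symmetry; rewrite E_ichgP; last by rewrite /ok /par; simp2.
rewrite E_idl; last by rewrite /ok; simp2.
rewrite E_idr //; by rewrite /ok; simp2.
Qed.

Lemma E_swap f g a b c d :
  ok (tComp (tId b) f) && ok (tComp f (tId a)) && ok (tComp (tId d) g) && ok (tComp g (tId c))
  && ~~ (par g && par f) ->
  E (tComp (tTens f (tId d)) (tTens (tId a) g)) (tComp (tTens (tId b) g) (tTens f (tId c))).
Proof.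
rewrite /ok /par /=; case Hf: (infer f) => [[[a1 b1] p1]|]; last by rewrite ?andbT ?andbF.
case Hg: (infer g) => [[[c1 d1] q1]|]; last by rewrite ?andbT ?andbF.
case: (b1 =P b) => ?; subst => //; case: (a =P a1) => ?; subst => //.
case: (d1 =P d) => ?; subst => //; case: (c =P c1) => ?; subst => //= H.
rewrite E_ichgP; last by rewrite /ok /par; simp2.
rewrite E_idl; last by rewrite /ok; simp2.
rewrite E_idr; last by rewrite /ok; simp2.
rewrite E_ichgP; last by rewrite /ok /par; simp2.
rewrite E_idl; last by rewrite /ok; simp2.
rewrite E_idr //; by rewrite /ok; simp2.
Qed.

Lemma E_mergeR (X Y Z R : term k) : E (tComp X Y) Z -> ok (tComp X (tComp Y R)) ->
  E (tComp X (tComp Y R)) (tComp Z R).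
Proof. by move=> H1 H2; rewrite E_compA // H1. Qed.

Lemma E_splitR (X Y Z R : term k) : E Z (tComp X Y) -> ok (tComp (tComp X Y) R) ->
  E (tComp Z R) (tComp X (tComp Y R)).
Proof. by move=> H1 H2; rewrite H1 E_compA' //. Qed.

Lemma Phi_etaeps : E (k:=k) (Phi (tComp tEta tEps)) tS.
Proof.
rewrite E_tcr // (E_compA' (tTens iPP tEta)) //.
have -> : E (k:=k) (tComp (tTens iPP tEps) (tTens (tTens iP tEta') iP)) iPP.
  rewrite (E_tensI [:: true] [:: true] tEps) // (E_tensA iP tEta' iP) // E_ichgP //.
  by rewrite E_idl // E_zz2 E_tens_id.
rewrite E_idr // E_compA' //.
have -> : E (k:=k) (tComp (tTens tS iQP) (tTens iPP tEta)) (tTens tS tEta).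
  by rewrite E_ichgP // E_idl // E_idr.
rewrite (E_slide1 tS tEta [:: true; true] [::]) // E_compA //.
have -> : E (k:=k) (tComp (tTens (tTens iP tEps') iP) (tTens iPP tEta)) iPP.
  rewrite (E_tensI [:: true] [:: true] tEta) // (E_tensA iP tEps' iP) // E_ichgP //.
  by rewrite E_idl // E_zz3 E_tens_id.
by rewrite E_idl // E_unitr.
Qed.

Notation tA := (tTens tCQ iP).
Notation tB := (tTens iQ tCP).
Notation Top := (tTens (tTens iP tEps') iP).
Notation Hb := (tTens (tTens iP tEta') iP).

Lemma M1 : E (k:=k) (tComp (tTens iPP tEps) (tComp (tTens iPP tB) Hb)) (tTens iP tCP).
Proof.
rewrite E_compA // E_ichgP // E_idl //.
rewrite (E_tensI [:: true] [:: true]) // (E_tensA iP tEta' iP) // E_ichgP // E_idl //.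
rewrite (E_tcr tEps tB [:: true]) // E_compA' // -(E_tensA iP iQ tCP) // E_tens_id E_ichgP // E_idl // E_idr //.
rewrite (E_slide2 tEta' tCP [::] [:: true]) // E_compA // E_zz2 E_idl // E_unitl //.
Qed.

Lemma M3 : E (k:=k) (tComp Top (tTens iPP tA)) (tComp Top (tTens (tTens iP tCP) iQP)).
Proof.
rewrite (E_tensA iP tEps' iP) // (E_tensI [:: true] [:: true]) // E_ichgP // E_idl //.
rewrite -(E_tensA iP tCQ iP) // E_ichgP // E_idl // -E_dotcap'.
rewrite (E_tensA iP tCP iQP) // E_ichgP // E_idl //.
rewrite (E_tensI' [:: false] [:: true] tCP) // E_ichgP // E_idl //.
Qed.

Lemma M0 : E (k:=k) (tComp Top (tTens iPP tEta)) iPP.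
Proof.
rewrite (E_tensI [:: true] [:: true] tEta) // (E_tensA iP tEps' iP) // E_ichgP //.
by rewrite E_idl // E_zz3 E_tens_id.
Qed.

Notation tD := (tComp (tComp tA (tComp tEta tEps)) tB).

Lemma Phi_D : E (k:=k) (Phi tD) (tComp tS (tComp (tTens tCP iP) (tTens iP tCP))).
Proof.
rewrite (E_tcr (tComp tA (tComp tEta tEps)) tB [:: true; true]) //.
rewrite (E_tcr tA (tComp tEta tEps) [:: true; true]) // (E_tcr tEta tEps [:: true; true]) //.
rewrite !E_compA' // M1.
rewrite (E_compA (tTens tS iQP)) // (E_swap tS tA [:: true; true] [:: true; true] [:: false; true] [:: false; true]) //.
rewrite E_compA' // (E_compA (tTens tS iQP)) // (E_swap tS tEta [:: true; true] [:: true; true] [::] [:: false; true]) //.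
rewrite E_compA' // (E_compA Top) // M3 E_compA' // (E_compA (tTens (tTens iP tCP) iQP)) //.
rewrite (E_swap (tTens iP tCP) tEta [:: true; true] [:: true; true] [::] [:: false; true]) //.
rewrite E_compA' // !E_unitr // (E_compA (tTens iP tCP) tS) // -E_sdot1 E_compA' //.
by rewrite (E_compA Top) // M0 E_idl.
Qed.

Notation iPPQ := (tId [:: true; true; false]).
Notation sg := (tComp (tComp (tTens tEps iPQ) (tTens (tTens iQ tS) iQ)) (tTens iQP tEta')).
Notation sg' := (tComp (tComp (tTens iQP tEps') (tTens (tTens iQ tS) iQ)) (tTens tEta iPQ)).

Lemma Winner : E (k:=k) (tComp (tTens iP sg) (tTens tEta' iP)) (tComp (tTens tS iQ) (tTens iP tEta')).
Proof.
rewrite (E_tcr (tComp (tTens tEps iPQ) (tTens (tTens iQ tS) iQ))) //.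
rewrite (E_tcr (tTens tEps iPQ)) // !E_compA' //.
rewrite -(E_tensA iP tEps iPQ) //.
rewrite (E_tensA iQ tS iQ) // -(E_tensA iP iQ (tTens tS iQ)) // E_tens_id.
rewrite -(E_tensA iP iQP tEta') // E_tens_id; cbn [cat].
rewrite (E_tensI [:: true; false] [:: true] tEta') //.
rewrite -(E_swap tEta' (tTens iP tEta') [::] [:: true; false] [:: true] [:: true; true; false]) // E_unitl //.
rewrite (E_compA (tTens iPQ (tTens tS iQ))) //.
rewrite -(E_swap tEta' (tTens tS iQ) [::] [:: true; false] [:: true; true; false] [:: true; true; false]) //.
rewrite E_unitl // E_compA' // E_compA //.
rewrite (E_tensI' [:: true] [:: true; false] tEta') // E_ichgP // E_zz2 E_idl // E_tens_id E_idl //.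
Qed.

Lemma Vinner : E (k:=k) (tComp (tTens tEps' iP) (tTens iP sg')) (tComp (tTens iP tEps') (tTens tS iQ)).
Proof.
rewrite (E_tcr (tComp (tTens iQP tEps') (tTens (tTens iQ tS) iQ))) //.
rewrite (E_tcr (tTens iQP tEps')) // !E_compA' //.
rewrite -(E_tensA iP iQP tEps') // E_tens_id; cbn [cat].
rewrite (E_tensI [:: true; false] [:: true] tEps') //.
rewrite (E_compA (tTens tEps' iP)) //.
rewrite (E_swap tEps' (tTens iP tEps') [:: true; false] [::] [:: true; true; false] [:: true]) //.
rewrite E_unitl // E_compA' //.
rewrite (E_tensA iQ tS iQ) // -(E_tensA iP iQ (tTens tS iQ)) // E_tens_id; cbn [cat].
rewrite (E_compA (tTens tEps' iPPQ)) //.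
rewrite (E_swap tEps' (tTens tS iQ) [:: true; false] [::] [:: true; true; false] [:: true; true; false]) //.
rewrite E_unitl // E_compA' //.
rewrite -(E_tensA iP tEta iPQ) // (E_tensI' [:: true] [:: true; false] tEps') //.
by rewrite E_ichgP // E_zz3 E_idl // E_tens_id E_idr.
Qed.

Lemma N1 : E (k:=k) (tComp (tTens iPP sg) Hb) (tComp (tTens (tTens iP tS) iQ) (tTens iPP tEta')).
Proof.
rewrite (E_tensI [:: true] [:: true] sg) // (E_tensA iP tEta' iP) // E_ichgP // E_idl // Winner.
by rewrite E_tcr // -(E_tensA iP tS iQ) // -(E_tensA iP iP tEta') // E_tens_id.
Qed.

Lemma N2 : E (k:=k) (tComp Top (tTens iPP sg')) (tComp (tTens iPP tEps') (tTens (tTens iP tS) iQ)).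
Proof.
rewrite (E_tensA iP tEps' iP) // (E_tensI [:: true] [:: true] sg') // E_ichgP // E_idl // Vinner.
by rewrite E_tcr // -(E_tensA iP iP tEps') // E_tens_id -(E_tensA iP tS iQ).
Qed.

Lemma K1 : E (k:=k) (tComp tS (tTens iPP tEps')) (tComp (tTens iPP tEps') (tTens (tTens tS iP) iQ)).
Proof.
symmetry; rewrite -(E_tensI' [:: true] [:: false] tS) //; cbn [cat].
by rewrite -(E_swap tS tEps' [:: true; true] [:: true; true] [:: true; false] [::]) // E_unitr.
Qed.

Lemma K2 : E (k:=k) (tComp (tTens (tTens tS iP) iQ) (tTens iPP tEta')) (tComp (tTens iPP tEta') tS).
Proof.
rewrite -(E_tensI' [:: true] [:: false] tS) //; cbn [cat].
by rewrite (E_swap tS tEta' [:: true; true] [:: true; true] [::] [:: true; false]) // E_unitr.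
Qed.

Notation s1Q := (tTens (tTens tS iP) iQ).
Notation s2Q := (tTens (tTens iP tS) iQ).

Lemma Phi_sig : E (k:=k) (Phi (tComp sigma' sigma)) (tComp tS (tComp (tTens iP Xc) tS)).
Proof.
rewrite /sigma /sigma' /idQ.
rewrite (E_tcr sg' sg [:: true; true]) // (E_compA' Top) // (E_compA' (tTens iPP sg')) // N1.
rewrite (E_compA (tTens tS iQP)) //.
rewrite (E_swap tS sg' [:: true; true] [:: true; true] [:: true; false] [:: false; true]) //.
rewrite E_compA' // (E_compA Top) // N2 E_compA' //.
rewrite (E_tensI' [:: true] [:: false] tS) //.
rewrite (E_compA s2Q s1Q) // (E_compA (tComp s2Q s1Q) s2Q) //.
rewrite -(E_tcl (tTens iP tS) (tTens tS iP) [:: false]) //.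
rewrite -(E_tcl (tComp (tTens iP tS) (tTens tS iP)) (tTens iP tS) [:: false]) //.
rewrite -E_braid !E_tcl // !E_compA' //.
rewrite (E_tcr (tTens iP tEps')) // (E_tcr (tTens tS iQ)) //.
rewrite -(E_tensA iP iP tEps') // -(E_tensA iP tS iQ) // -(E_tensA iP iP tEta') // !E_tens_id; cbn [cat].
rewrite !E_compA' // (E_compA tS) // K1 E_compA' // -K2 //.
Qed.

Lemma E_decomp : E (k:=k) iQP (tAdd (tAdd (tComp sigma' sigma) (tComp tEta tEps)) tD).
Proof.
rewrite E_sigma2.
set e := tComp tEta tEps; set me := tScale (-1) e; set mD := tScale (-1) tD.
rewrite -(E_addA (tAdd iQP me) mD e) // (E_addC mD e) // (E_addA (tAdd iQP me) e mD) //.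
rewrite -(E_addA iQP me e) // E_cancel //.
by rewrite -(E_addA iQP mD tD) // E_cancel.
Qed.

Lemma Phi_cong (M N : term k) : E M N -> E (Phi M) (Phi N).
Proof.
move=> H; apply: E_comp; first reflexivity.
apply: E_comp; last reflexivity; apply: E_tens; [reflexivity|exact: H].
Qed.

Lemma Phi_lin :
  E (k:=k) (Phi (tAdd (tAdd (tComp sigma' sigma) (tComp tEta tEps)) tD))
    (tAdd (tAdd (Phi (tComp sigma' sigma)) (Phi (tComp tEta tEps))) (Phi tD)).
Proof. by rewrite !E_tensDr // !E_compDl // !E_compDr. Qed.

Lemma X1 : E (k:=k) (tTens Xc iP)
  (tAdd (tAdd (tComp tS (tComp (tTens iP Xc) tS)) tS) (tComp tS (tComp (tTens tCP iP) (tTens iP tCP)))).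
Proof.
by rewrite Phi_id (Phi_cong _ _ E_decomp) Phi_lin Phi_sig Phi_etaeps Phi_D.
Qed.


Lemma LOC1 : E (k:=k) (tComp tS (tTens Xc iP))
  (tAdd (tAdd (tComp (tTens iP Xc) tS) iPP) (tComp (tTens tCP iP) (tTens iP tCP))).
Proof.
rewrite X1 !E_compDr // !(E_compA tS tS) // !E_s2.
by rewrite !(E_idl [:: true; true]).
Qed.

Lemma C21 : E (k:=k) (tComp (tTens iP tCP) (tTens tCP iP)) (tScale (-1) (tComp (tTens tCP iP) (tTens iP tCP))).
Proof.
rewrite (E_ichgN iP tCP tCP iP) // (E_ichgP tCP iP iP tCP) //.
by rewrite !(E_idl [:: true] tCP) // !(E_idr [:: true] tCP).
Qed.

Lemma LOC2 : E (k:=k) (tComp (tTens Xc iP) tS)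
  (tAdd (tAdd (tComp tS (tTens iP Xc)) iPP) (tScale (-1) (tComp (tTens tCP iP) (tTens iP tCP)))).
Proof.
rewrite X1 !E_compDl // !E_compA' // !E_s2 E_idr //.
rewrite -E_sdot1 (E_compA (tTens tCP iP) tS) // E_sdot2 E_compA' //.
by rewrite (E_compA tS tS) // E_s2 E_idl // C21.
Qed.

Notation Yc := (tComp (tTens iP tEps') (tComp (tTens tS iQ) (tTens iP (tComp (tTens iP tCQ) tEta')))).

Lemma L3a : E (k:=k) (tComp tCP Xc) (tScale (-1) Yc).
Proof.
have SA1 : E (k:=k) (tComp tCP (tTens iP tEps')) (tComp (tTens iP tEps') (tTens tCP iPQ)).
  rewrite -(E_slide1 tCP tEps' [:: true] [:: true; false]) //.
  by rewrite (E_slide2 tCP tEps' [:: true] [::]) // E_unitr.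
have SA2 : E (k:=k) (tComp (tTens tCP iPQ) (tTens tS iQ)) (tComp (tTens tS iQ) (tTens (tTens iP tCP) iQ)).
  rewrite (E_tensI' [:: true] [:: false] tCP) // !E_ichgP // !(E_idl [:: false]) // E_sdot2 //.
have SA3 : E (k:=k) (tComp (tTens (tTens iP tCP) iQ) (tTens iP tEta'))
              (tScale (-1) (tTens iP (tComp (tTens iP tCQ) tEta'))).
  by rewrite (E_tensA iP tCP iQ) // E_ichgP // E_idl // E_dotcup' E_tensZr.
rewrite !E_compA' // (E_compA tCP) // SA1 E_compA' // (E_compA (tTens tCP iPQ)) // SA2.
by rewrite E_compA' // SA3 !E_compZr.
Qed.

Lemma L3b : E (k:=k) (tComp Xc tCP) Yc.
Proof.
have SB3 : E (k:=k) (tComp (tTens iP tEta') tCP) (tComp (tTens tCP iPQ) (tTens iP tEta')).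
  rewrite -(E_slide2 tCP tEta' [:: true] [:: true; false]) //.
  by rewrite (E_slide1 tCP tEta' [:: true] [::]) // E_unitr.
have SB2 : E (k:=k) (tComp (tTens tS iQ) (tTens tCP iPQ)) (tComp (tTens (tTens iP tCP) iQ) (tTens tS iQ)).
  rewrite (E_tensI' [:: true] [:: false] tCP) // !E_ichgP // !(E_idl [:: false]) // E_sdot1 //.
have SB1 : E (k:=k) (tComp (tTens iP tEps') (tTens (tTens iP tCP) iQ)) (tComp (tTens iP tEps') (tTens iPP tCQ)).
  rewrite (E_tensA iP tCP iQ) // E_ichgP // E_idl // E_dotcap'.
  by rewrite (E_tensI [:: true] [:: true] tCQ) // E_ichgP // E_idl.
have SB4 : E (k:=k) (tComp (tTens iPP tCQ) (tTens iP tEta')) (tTens iP (tComp (tTens iP tCQ) tEta')).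
  by rewrite (E_tensI [:: true] [:: true] tCQ) // E_ichgP // E_idl.
rewrite !E_compA' // SB3 (E_compA (tTens tS iQ)) // SB2 E_compA' // (E_compA (tTens iP tEps')) // SB1.
rewrite E_compA' // (E_compA (tTens iPP tCQ)) //.
rewrite -(E_swap tS tCQ [:: true; true] [:: true; true] [:: false] [:: false]) //.
by rewrite E_compA' // SB4.
Qed.

Lemma LOC3 : E (k:=k) (tComp tCP Xc) (tScale (-1) (tComp Xc tCP)).
Proof. by rewrite L3a L3b. Qed.
End Loc.

Section Lift.
Context {k : fieldType}.
Implicit Types f g h : term k.
Ltac simp3 := repeat progress (rewrite /= ?eqxx ?andbF ?andFb; try match goal with H : infer _ = _ |- _ => rewrite H end).
Hint Resolve E_refl : core.

Notation wrap A B f := (tTens (tTens (tId A) f) (tId B)).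

Lemma E_wcomp A B f g : ok (tComp f g) -> E (tComp (wrap A B f) (wrap A B g)) (wrap A B (tComp f g)).
Proof.
rewrite /ok /=; case Hf: (infer f) => [[[b c] p]|] //; case Hg: (infer g) => [[[a b1] q]|] //.
case: (b1 =P b) => ? //; subst => _.
rewrite E_ichgP; last by rewrite /ok /par; simp3.
rewrite E_ichgP; last by rewrite /ok /par; simp3.
rewrite E_idl; last by rewrite /ok /par; simp3.
rewrite E_idl //; by rewrite /ok /par; simp3.
Qed.

Lemma E_wadd A B f g : ok (tAdd f g) -> E (wrap A B (tAdd f g)) (tAdd (wrap A B f) (wrap A B g)).
Proof.
rewrite /ok /=; case Hf: (infer f) => [[[b c] p]|] //; case Hg: (infer g) => [[[a b1] q]|] //.
case: (b =P a) => ? //; subst; case: (c =P b1) => ? //; subst; case: (p =P q) => ? //; subst => _.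
rewrite E_tensDr; last by rewrite /ok /par; simp3.
rewrite E_tensDl //; by rewrite /ok /par; simp3.
Qed.

Lemma E_wscale A B c f : ok f -> E (wrap A B (tScale c f)) (tScale c (wrap A B f)).
Proof.
rewrite /ok /=; case Hf: (infer f) => [[[b d] p]|] // _.
rewrite E_tensZr; last by rewrite /ok /par; simp3.
rewrite E_tensZl //; by rewrite /ok /par; simp3.
Qed.

Lemma E_wid A B a : E (k:=k) (wrap A B (tId a)) (tId ((A ++ a) ++ B)).
Proof. by rewrite !E_tens_id. Qed.


Lemma E_wR A B f : ok f -> E (wrap A (true :: B) f) (wrap A B (tTens f (tId [:: true]))).
Proof.
rewrite /ok; case Hf: (infer f) => [[[b d] p]|] // _.
rewrite (E_tensI' [:: true] B); last by rewrite /ok; simp3.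
rewrite (E_tensA (tId A)) //; by rewrite /ok; simp3.
Qed.

Lemma E_wL A B f : ok f -> E (wrap (A ++ [:: true]) B f) (wrap A B (tTens (tId [:: true]) f)).
Proof.
rewrite /ok; case Hf: (infer f) => [[[b d] p]|] // _.
rewrite (E_tensI A [:: true]) //; by rewrite /ok; simp3.
Qed.

Lemma E_heq f g a b p : E f g -> infer f = Some (a, b, p) -> heq a b p f g.
Proof. by case=> _ H /H. Qed.

Lemma lift1 n i : (1 <= i <= n.-1)%N ->
     @heq k (Pn n) (Pn n) false
         (tComp (Ti n i) (Xi n i))
         (tAdd (tAdd (tComp (Xi n i.+1) (Ti n i)) (tId (Pn n)))
               (tComp (Ci n i) (Ci n i.+1)))
  /\ @heq k (Pn n) (Pn n) false
         (tComp (Xi n i) (Ti n i))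
         (tAdd (tAdd (tComp (Ti n i) (Xi n i.+1)) (tId (Pn n)))
               (tScale (-1) (tComp (Ci n i) (Ci n i.+1)))).
Proof.
case/andP=> Hi1 Hi2.
have Hin : (i < n)%N by lia.
set A := nseq i.-1 true; set B := nseq (n - i.+1) true.
have enB : nseq (n - i) true = true :: B by rewrite /B -subSS subSn.
have enA : nseq i true = A ++ [:: true] by rewrite /A -[[:: true]]/(nseq 1 true) -nseqD addn1 prednK.
have eId : Pn n = (A ++ [:: true; true]) ++ B.
  by rewrite /A /B -[[:: true; true]]/(nseq 2 true) -!nseqD /Pn; congr nseq; lia.
have eXi : Xi (k:=k) n i = wrap A (true :: B) Xcurl by rewrite /Xi enB.
have eXi1 : Xi (k:=k) n i.+1 = wrap (A ++ [:: true]) B Xcurl by rewrite /Xi /= enA.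
have eCi : Ci (k:=k) n i = wrap A (true :: B) tCP by rewrite /Ci enB.
have eCi1 : Ci (k:=k) n i.+1 = wrap (A ++ [:: true]) B tCP by rewrite /Ci /= enA.
have eTi : Ti (k:=k) n i = wrap A B tS by [].
split.
- apply: E_heq; last by rewrite eXi eTi eId /= -!catA /= eqxx.
  rewrite eTi eXi eXi1 eCi eCi1 eId !E_wR // !E_wL // -(E_wid A B [:: true; true]) !E_wcomp //.
  rewrite -E_wadd // -E_wadd //.
  apply: E_tens => //; apply: E_tens => //; exact: LOC1.
- apply: E_heq; last by rewrite eXi eTi eId /= -!catA /= eqxx.
  rewrite eTi eXi eXi1 eCi eCi1 eId !E_wR // !E_wL // -(E_wid A B [:: true; true]) !E_wcomp //.
  rewrite -E_wscale // -E_wadd // -E_wadd //.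
  apply: E_tens => //; apply: E_tens => //; exact: LOC2.
Qed.

Ltac sc := by rewrite /ok /par; simp3; rewrite ?addbF.

Lemma ePn n m : (1 <= m <= n)%N -> (nseq m.-1 true ++ [:: true]) ++ nseq (n - m) true = Pn n.
Proof.
case/andP=> H1 H2; rewrite -[[:: true]]/(nseq 1 true) -!nseqD /Pn; congr nseq; lia.
Qed.

Lemma comm_lift n i j (F G : term k) p q : (1 <= i)%N -> (i < j)%N -> (j <= n)%N ->
  infer F = Some ([:: true], [:: true], p) -> infer G = Some ([:: true], [:: true], q) -> ~~ (q && p) ->
  E (tComp (wrap (nseq i.-1 true) (nseq (n - i) true) F) (wrap (nseq j.-1 true) (nseq (n - j) true) G))
    (tComp (wrap (nseq j.-1 true) (nseq (n - j) true) G) (wrap (nseq i.-1 true) (nseq (n - i) true) F)).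
Proof.
move=> Hi Hij Hjn HF HG Hqp.
set A := nseq i.-1 true; set M := nseq (j - i.+1) true; set B := nseq (n - j) true.
have eL : nseq (n - i) true = (M ++ [:: true]) ++ B.
  by rewrite /M /B -[[:: true]]/(nseq 1 true) -!nseqD; congr nseq; lia.
have eR : nseq j.-1 true = (A ++ [:: true]) ++ M.
  by rewrite /M /A -[[:: true]]/(nseq 1 true) -!nseqD; congr nseq; lia.
rewrite eL eR.
rewrite (E_tensI' (M ++ [:: true]) B); last sc.
rewrite (E_tensI' M [:: true]); last sc.
rewrite (E_tensA (tId A) F (tId M)); last sc.
rewrite (E_tensA (tId A) (tTens F (tId M)) (tId [:: true])); last sc.
rewrite (E_tensI (A ++ [:: true]) M G); last sc.
rewrite (E_tensI A [:: true] (tTens (tId M) G)); last sc.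
rewrite -(E_tensA (tId [:: true]) (tId M) G); last sc.
rewrite E_wcomp; last sc.
rewrite E_wcomp; last sc.
apply: E_tens => //; apply: E_tens => //.
rewrite E_ichgP; last sc.
rewrite E_ichgP; last sc.
rewrite (E_idr [:: true] F); last sc.
rewrite (E_idl M (tId M)); last sc.
rewrite (E_idl [:: true] G); last sc.
rewrite E_ichgP; last sc.
rewrite E_ichgP; last sc.
rewrite (E_idl [:: true] F); last sc.
rewrite (E_idl M (tId M)); last sc.
rewrite (E_idr [:: true] G) //; sc.
Qed.

Lemma infer_wrap A B f a b p : infer f = Some (a, b, p) ->
  infer (wrap A B f) = Some ((A ++ a) ++ B, (A ++ b) ++ B, p).
Proof. by move=> H; rewrite /= H addbF. Qed.

Arguments infer_wrap A B {f a b p}.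
Lemma infer_comp f g a b c p q : infer f = Some (b, c, p) -> infer g = Some (a, b, q) ->
  infer (tComp f g) = Some (a, c, p (+) q).
Proof. by move=> Hf Hg; rewrite /= Hf Hg eqxx. Qed.
Arguments infer_comp {f g a b c p q}.
Lemma infer_Xc : infer (Xcurl : term k) = Some ([:: true], [:: true], false).
Proof. by []. Qed.

Lemma lift2 n i j : (1 <= i <= n)%N -> (1 <= j <= n)%N ->
     @heq k (Pn n) (Pn n) true
         (tComp (Ci n i) (Xi n j))
         (tScale ((-1) ^+ (i == j)) (tComp (Xi n j) (Ci n i)))
  /\ @heq k (Pn n) (Pn n) false
         (tComp (Xi n i) (Xi n j)) (tComp (Xi n j) (Xi n i)).
Proof.
move=> Hi Hj.
have TX m : (1 <= m <= n)%N -> infer (Xi (k:=k) n m) = Some (Pn n, Pn n, false).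
  by move=> Hm; rewrite /Xi (infer_wrap _ _ infer_Xc) ePn.
have TC m : (1 <= m <= n)%N -> infer (Ci (k:=k) n m) = Some (Pn n, Pn n, true).
  by move=> Hm; rewrite /Ci (infer_wrap _ _ (f:=tCP) (a:=[:: true]) (b:=[:: true]) (p:=true) erefl) ePn.
have TCX : infer (tComp (Ci (k:=k) n i) (Xi n j)) = Some (Pn n, Pn n, true).
  exact: infer_comp (TC i Hi) (TX j Hj).
have TXX : infer (tComp (Xi (k:=k) n i) (Xi n j)) = Some (Pn n, Pn n, false).
  exact: infer_comp (TX i Hi) (TX j Hj).
case/andP: (Hi) => Hi1 Hi2; case/andP: (Hj) => Hj1 Hj2.
case: (ltngtP i j) => [Hlt|Hgt|Heq].
- rewrite expr0; split; apply: E_heq; try eassumption.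
    rewrite E_scale1; last by rewrite /ok (infer_comp (TX j Hj) (TC i Hi)).
    exact: (comm_lift _ _ _ _ _ true false).
  exact: (comm_lift _ _ _ _ _ false false).
- rewrite expr0; split; apply: E_heq; try eassumption.
    rewrite E_scale1; last by rewrite /ok (infer_comp (TX j Hj) (TC i Hi)).
    symmetry; exact: (comm_lift _ _ _ _ _ false true).
  symmetry; exact: (comm_lift _ _ _ _ _ false false).
- subst j; rewrite expr1; split.
    apply: E_heq; last exact: TCX.
    rewrite /Ci /Xi !E_wcomp // -E_wscale //.
    apply: E_tens => //; apply: E_tens => //; exact: LOC3.
  apply: heq_refl; exact: infer_sound TXX.
Qed.
End Lift.

Theorem proposition4 (k : fieldType) (char0 : [pchar k] =i pred0)
    (n : nat) (hn : (2 <= n)%N) :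
  (forall i : nat, (1 <= i <= n.-1)%N ->
     @heq k (Pn n) (Pn n) false
         (tComp (Ti n i) (Xi n i))
         (tAdd (tAdd (tComp (Xi n i.+1) (Ti n i)) (tId (Pn n)))
               (tComp (Ci n i) (Ci n i.+1)))
  /\ @heq k (Pn n) (Pn n) false
         (tComp (Xi n i) (Ti n i))
         (tAdd (tAdd (tComp (Ti n i) (Xi n i.+1)) (tId (Pn n)))
               (tScale (-1) (tComp (Ci n i) (Ci n i.+1)))))
  /\
  (forall i j : nat, (1 <= i <= n)%N -> (1 <= j <= n)%N ->
     @heq k (Pn n) (Pn n) true
         (tComp (Ci n i) (Xi n j))
         (tScale ((-1) ^+ (i == j)) (tComp (Xi n j) (Ci n i)))
  /\ @heq k (Pn n) (Pn n) false
         (tComp (Xi n i) (Xi n j)) (tComp (Xi n j) (Xi n i))).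
Proof.
split; first by move=> i Hi; exact: lift1.
by move=> i j Hi Hj; exact: lift2.
Qed.
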